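(* Let $n\geq 8$, let $\mathfrak{X}=\{A_0,A_1,A_2\}$ be a non-symmetric class $2$ association scheme of order $n-1$, and let $B_1$ be the $(2n-1)\times(2n-1)$ matrix defined from $A_1$ as in the context, so that $\{I_{2n-1},B_1,B_1^T\}$ is a non-symmetric class $2$ association scheme. For $i\in\{1,\dots,2n-1\}$ let $N(i)=\{j : (B_1)_{ij}=1\}$, and for $1\le i<j<k\le 2n-1$ let $\nu(i,j,k)=|N(i)\cap N(j)\cap N(k)|$. Then $\nu(i,j,k)\leq (n-2)/2$ for all $1\le i<j<k\le 2n-1$, with equality if and only if $(i,j,k)=(a,n,n+a)$ for some $1\leq a\leq n-1$.
   Context: An association scheme of order $N$ is a set $\{A_0,\dots,A_d\}$ of $N\times N$ $0/1$-matrices such that $A_0=I_N$, $\sum_i A_i=J_N$ (all-ones matrix), each $A_i^T$ is in the set, and each product $A_iA_j$ is a linear combination of the $A_k$. It is non-symmetric of class $2$ if $d=2$ and $A_1^T=A_2\neq A_1$. (For such a scheme of order $n-1$ one has $n\equiv 0 \pmod 4$.) Definition of $B_1$ (indices $1\le i,j\le n-1$): $(B_1)_{i,j}=(A_1)_{ij}$, $(B_1)_{i,n}=0$, $(B_1)_{i,n+j}=(A_0+A_1)_{ij}$; $(B_1)_{n,j}=1$, $(B_1)_{n,n}=0$, $(B_1)_{n,n+j}=0$; $(B_1)_{n+i,j}=(A_1)_{ij}$, $(B_1)_{n+i,n}=1$, $(B_1)_{n+i,n+j}=(A_2)_{ij}$. In block form, $B_1=\begin{bmatrix} A_1 & \mathbf{0}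 & A_0+A_1\\ \mathbf{1}^T & 0 & \mathbf{0}^T\\ A_1 & \mathbf{1} & A_2\end{bmatrix}$ with blocks indexed by $\{1,\dots,n-1\},\{n\},\{n+1,\dots,2n-1\}$. *)

(* Defs.v *)
From HB Require Import structures.
From mathcomp Require Import all_boot all_order all_algebra.
Set Implicit Arguments. Unset Strict Implicit. Unset Printing Implicit Defensive.
Import Order.TTheory GRing.Theory Num.Theory.
Local Open Scope ring_scope.

Definition nonsym_class2_scheme (m : nat) (A0 A1 A2 : 'M[int]_m) : Prop :=
     A0 = 1%:M
  /\ (forall i j, (A1 i j == 0) || (A1 i j == 1))
  /\ (forall i j, (A2 i j == 0) || (A2 i j == 1))
  /\ A0 + A1 + A2 = const_mx 1
  /\ A1^T = A2
  /\ A2 != A1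
  /\ (forall X Y, X \in [:: A0; A1; A2] -> Y \in [:: A0; A1; A2] ->
        exists c0 c1 c2 : int, X *m Y = c0 *: A0 + c1 *: A1 + c2 *: A2).

(* The matrix B_1 of order m + 1 + m (= 2n-1 with m = n-1), in block form
   [ A1  0  A0+A1 ; 1^T 0 0^T ; A1 1 A2 ], blocks indexed by
   {0..m-1}, {m}, {m+1..2m} (0-based). *)
Definition B1mx (m : nat) (A0 A1 A2 : 'M[int]_m) : 'M[int]_(m + 1 + m) :=
  block_mx (block_mx A1 (0 : 'M_(m, 1)) (const_mx 1 : 'M_(1, m)) (0 : 'M_(1, 1)))
           (col_mx (A0 + A1) (0 : 'M_(1, m)))
           (row_mx A1 (const_mx 1 : 'M_(m, 1)))
           A2.

Definition nbhd (N : nat) (B : 'M[int]_N) (i : 'I_N) : {set 'I_N} :=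
  [set j | B i j == 1].

Definition nu (N : nat) (B : 'M[int]_N) (i j k : 'I_N) : nat :=
  #|nbhd B i :&: nbhd B j :&: nbhd B k|.

(* Main.v *)
Require Import Defs.
From HB Require Import structures.
From mathcomp Require Import all_boot all_order all_algebra.
From mathcomp Require Import zify.
Import Order.TTheory GRing.Theory Num.Theory.
Set Implicit Arguments. Unset Strict Implicit. Unset Printing Implicit Defensive.

Lemma card_indic (T : finType) (S : {set T}) : #|S| = \sum_(w : T) (w \in S : nat).
Proof.
rewrite -sum1_card big_mkcond /=; apply: eq_bigr => w _; by case: (w \in S).
Qed.

Lemma sum_split (m : nat) (F : 'I_m -> nat) x0 l :
  (forall y, y != x0 -> F y = l) -> \sum_y F y = F x0 + m.-1 * l.
Proof.
move=> H; rewrite (bigD1 x0) //=; congr (_ + _).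
rewrite (eq_bigr (fun _ => l)); last by move=> y /H.
rewrite sum_nat_const cardC1 card_ord //.
Qed.

Section Tourn.
Variable m : nat.
Variables A0 A1 A2 : 'M[int]_m.
Hypothesis HS : nonsym_class2_scheme A0 A1 A2.

Definition ed x y := A1 x y == 1.
Definition Os x := [set y | ed x y].
Definition Is x := [set y | ed y x].

Lemma A1_01 x y : (A1 x y = 0) \/ (A1 x y = 1).
Proof.
case: HS => _ [h01 _]; by case/orP: (h01 x y) => /eqP ->; [left|right].
Qed.

Lemma A2E x y : A2 x y = A1 y x.
Proof. case: HS => _ [_ [_ [_ [hT _]]]]; by rewrite -hT mxE. Qed.

Lemma sumE x y : ((x == y)%:R + A1 x y + A1 y x = 1)%R.
Proof.
case: HS => h0 [_ [_ [hsum _]]].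
have := congr1 (fun M : 'M[int]_m => M x y) hsum; rewrite /= !mxE h0 !mxE (A2E x y).
by [].
Qed.

Lemma ed_irr x : ~~ ed x x.
Proof. have := sumE x x; rewrite eqxx /ed; case: (A1_01 x x) => ->; lia. Qed.

Lemma ed_tourn x y : x != y -> ed y x = ~~ ed x y.
Proof.
move=> /negbTE nxy; have := sumE x y; rewrite nxy /ed.
case: (A1_01 x y) => ->; case: (A1_01 y x) => -> /=; lia.
Qed.

Lemma ed_asym x y : ed x y -> ~~ ed y x.
Proof.
move=> h; have nxy : x != y by apply/eqP => e; move: h; rewrite e (negbTE (ed_irr y)).
by rewrite ed_tourn // h.
Qed.

Lemma mulE x y : (A1 *m A2)%R x y = (#|Os x :&: Os y|%:R)%R.
Proof.
rewrite mxE card_indic natr_sum; apply: eq_bigr => w _.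
rewrite A2E !inE /ed.
by case: (A1_01 x w) => ->; case: (A1_01 y w) => ->.
Qed.

Lemma mulE2 x y : (A2 *m A1)%R x y = (#|Is x :&: Is y|%:R)%R.
Proof.
rewrite mxE card_indic natr_sum; apply: eq_bigr => w _.
rewrite A2E !inE /ed.
by case: (A1_01 w x) => ->; case: (A1_01 w y) => ->.
Qed.


Lemma A1d x : A1 x x = 0%R.
Proof. have := ed_irr x; rewrite /ed; case: (A1_01 x x) => -> //. Qed.

Lemma A1e x y : ed x y -> A1 x y = 1%R /\ A1 y x = 0%R.
Proof.
move=> h; have := ed_asym h; move: h; rewrite /ed.
by case: (A1_01 x y) => ->; case: (A1_01 y x) => ->.
Qed.

Lemma const_from (M : 'M[int]_m) (P : 'I_m -> {set 'I_m}) :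
 (exists c0 c1 c2 : int, M = (c0 *: A0 + c1 *: A1 + c2 *: A2)%R) ->
 (forall x y, M x y = (#|P x :&: P y|%:R)%R) ->
 (forall x y, #|P x| = #|P y|) /\ (forall x y x' y', x != y -> x' != y' -> #|P x :&: P y| = #|P x' :&: P y'|).
Proof.
case=> c0 [c1 [c2 hM]] hP.
have h0 : A0 = 1%:M%R by case: HS.
have E x y : M x y = (c0 * (x==y)%:R + c1 * A1 x y + c2 * A1 y x)%R.
  by rewrite hM !mxE h0 !mxE A2E.
have D x : (#|P x|%:R = c0 :> int)%R.
  by rewrite -(setIid (P x)) -hP E eqxx A1d; lia.
have Ed x y : ed x y -> (#|P x :&: P y|%:R = c1 :> int)%R.
  move=> h; have nxy : x != y by apply/eqP => e; move: h; rewrite e (negbTE (ed_irr y)).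
  case: (A1e h) => h1 h2; rewrite -hP E (negbTE nxy) h1 h2; lia.
have Ne x y : x != y -> (#|P x :&: P y|%:R = c1 :> int)%R.
  move=> nxy; case hxy: (ed x y); first exact: Ed.
  rewrite setIC; apply: Ed; by rewrite ed_tourn // hxy.
split.
  move=> x y; have := D x; have := D y; lia.
move=> x y x' y' nxy nxy'; have := Ne _ _ nxy; have := Ne _ _ nxy'; lia.
Qed.

Lemma constO : (forall x y, #|Os x| = #|Os y|) /\ (forall x y x' y', x != y -> x' != y' -> #|Os x :&: Os y| = #|Os x' :&: Os y'|).
Proof.
apply: const_from; last exact: mulE.
case: HS => _ [_ [_ [_ [_ [_ hp]]]]]; apply: hp; by rewrite !inE eqxx ?orbT.
Qed.

Lemma constI : (forall x y, #|Is x| = #|Is y|) /\ (forall x y x' y', x != y -> x' != y' -> #|Is x :&: Is y| = #|Is x' :&: Is y'|).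
Proof.
apply: const_from; last exact: mulE2.
case: HS => _ [_ [_ [_ [_ [_ hp]]]]]; apply: hp; by rewrite !inE eqxx ?orbT.
Qed.


Lemma sumP (P : 'I_m -> {set 'I_m}) x :
  \sum_y #|P x :&: P y| = \sum_(w in P x) #|[set y | w \in P y]|.
Proof.
under eq_bigr => y _ do rewrite card_indic.
rewrite exchange_big /= [RHS]big_mkcond /=; apply: eq_bigr => w _.
case: (boolP (w \in P x)) => hw.
  rewrite card_indic; apply: eq_bigr => y _; by rewrite !inE hw.
by rewrite big1 // => y _; rewrite !inE (negbTE hw).
Qed.

Lemma partOI x : #|Os x| + #|Is x| = m.-1.
Proof.
rewrite -cardsUI.
have -> : Os x :&: Is x = set0.
  apply/setP => y; rewrite !inE; apply/negbTE; apply/negP => /andP[h1 h2].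
  by move: (ed_asym h1); rewrite h2.
have -> : Os x :|: Is x = [set~ x].
  apply/setP => y; rewrite !inE; case: (eqVneq y x) => [->|ne].
    by rewrite (negbTE (ed_irr x)).
  by rewrite (ed_tourn (x:=x) (y:=y)) ?orbN // eq_sym.
by rewrite cards0 addn0 cardsC1 card_ord.
Qed.

Lemma params : 7 <= m -> exists k l, [/\ m = k.*2.+1, k = l.*2.+1,
  forall x, #|Os x| = k /\ #|Is x| = k &
  forall x y, x != y -> #|Os x :&: Os y| = l /\ #|Is x :&: Is y| = l].
Proof.
move=> hm.
have [dO pO] := constO; have [dI pI] := constI.
pose x0 : 'I_m := Ordinal (leq_trans (isT : 0 < 7) hm).
pose x1 : 'I_m := Ordinal (leq_trans (isT : 1 < 7) hm).
have n01 : x0 != x1 by [].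
set k := #|Os x0|; set kI := #|Is x0|.
have hk x : #|Os x| = k by exact: dO.
have hkI x : #|Is x| = kI by exact: dI.
have ex : \sum_(x : 'I_m) #|Os x| = \sum_(x:'I_m) #|Is x|.
  under eq_bigr do rewrite card_indic.
  under [RHS]eq_bigr do rewrite card_indic.
  rewrite exchange_big; apply: eq_bigr => y _; apply: eq_bigr => x _; by rewrite !inE.
rewrite (sum_split (x0 := x0) (l := k)) in ex; last by move=> y _.
rewrite (sum_split (x0 := x0) (l := kI)) in ex; last by move=> y _.
have p0 := partOI x0.
have ekk : k = kI by rewrite -/k -/kI in ex p0; nia.
set l := #|Os x0 :&: Os x1|; set lI := #|Is x0 :&: Is x1|.
have hl x y : x != y -> #|Os x :&: Os y| = l by move=> h; exact: pO.
have hlI x y : x != y -> #|Is x :&: Is y| = lI by move=> h; exact: pI.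
have s1 := sumP Os x0.
rewrite (sum_split (x0 := x0) (l := l)) in s1; last by move=> y; rewrite eq_sym; exact: hl.
rewrite setIid (eq_bigr (fun _ => kI)) in s1; last first.
  move=> w _; rewrite -(hkI w); apply: eq_card => y; by rewrite !inE.
rewrite sum_nat_const -/k in s1.
have s2 := sumP Is x0.
rewrite (sum_split (x0 := x0) (l := lI)) in s2; last by move=> y; rewrite eq_sym; exact: hlI.
rewrite setIid (eq_bigr (fun _ => k)) in s2; last first.
  move=> w _; rewrite -(hk w); apply: eq_card => y; by rewrite !inE.
rewrite sum_nat_const -/kI in s2.
have kpos : 0 < k by nia.
have e1 : k = l.*2.+1.
  apply/eqP; rewrite -(eqn_pmul2l kpos); apply/eqP; nia.
have e2 : k = lI.*2.+1.
  apply/eqP; rewrite -(eqn_pmul2l kpos); apply/eqP; nia.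
exists k, l; split => //.
- nia.
- by move=> x; rewrite hk hkI ekk.
- move=> x y nxy; rewrite hl // hlI //; nia.
Qed.

End Tourn.

Section BB.
Variable m : nat.
Variables A0 A1 A2 : 'M[int]_m.
Hypothesis HS : nonsym_class2_scheme A0 A1 A2.

Definition Lx (x : 'I_m) : 'I_(m+1+m) := lshift m (lshift 1 x).
Definition Inf : 'I_(m+1+m) := lshift m (rshift m (ord0 : 'I_1)).
Definition Rx (x : 'I_m) : 'I_(m+1+m) := rshift (m+1) x.

Lemma valL x : val (Lx x) = val x. Proof. by []. Qed.
Lemma valI : val Inf = m. Proof. by rewrite /= addn0. Qed.
Lemma valR x : val (Rx x) = m + 1 + val x. Proof. by []. Qed.

Lemma idx_cases (u : 'I_(m+1+m)) :
  (exists x, u = Lx x) \/ u = Inf \/ (exists x, u = Rx x).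
Proof.
have hu := ltn_ord u.
case: (ltnP u m) => h1.
  left; exists (Ordinal h1); exact: val_inj.
case: (eqVneq (u : nat) m) => h2.
  right; left; apply: val_inj; rewrite valI; exact: h2.
right; right.
have h3 : u - (m + 1) < m by lia.
exists (Ordinal h3); apply: val_inj; rewrite valR /=; lia.
Qed.

Lemma card_dec (S : {set 'I_(m+1+m)}) :
  #|S| = #|[set y | Lx y \in S]| + (Inf \in S) + #|[set y | Rx y \in S]|.
Proof.
rewrite card_indic big_split_ord /= big_split_ord /= big_ord1.
congr (_ + _ + _); rewrite card_indic; apply: eq_bigr => i _; by rewrite inE.
Qed.

Definition BM := B1mx A0 A1 A2.
Definition Fset u := [set y | BM u (Lx y) == 1%R].
Definition ee u := BM u Inf == 1%R.
Definition Gset u := [set y | BM u (Rx y) == 1%R].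

Lemma nu_dec u v w :
  nu BM u v w = #|Fset u :&: Fset v :&: Fset w| + (ee u && ee v && ee w)
                + #|Gset u :&: Gset v :&: Gset w|.
Proof.
rewrite /nu card_dec; congr (_ + _ + _).
- apply: eq_card => y; by rewrite !inE.
- by rewrite !inE.
- apply: eq_card => y; by rewrite !inE.
Qed.

Definition Op x := [set y | (y == x) || ed A1 x y].

Lemma FL x : Fset (Lx x) = Os A1 x.
Proof. apply/setP => y; by rewrite !inE /BM /B1mx /Lx !block_mxEul. Qed.
Lemma FI : Fset Inf = setT.
Proof. apply/setP => y; by rewrite !inE /BM /B1mx /Lx /Inf block_mxEul block_mxEdl mxE. Qed.
Lemma FR x : Fset (Rx x) = Os A1 x.
Proof. apply/setP => y; by rewrite !inE /BM /B1mx /Lx /Rx block_mxEdl row_mxEl. Qed.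
Lemma eL x : ee (Lx x) = false.
Proof. by rewrite /ee /BM /B1mx /Lx /Inf block_mxEul block_mxEur mxE. Qed.
Lemma eI : ee Inf = false.
Proof. by rewrite /ee /BM /B1mx /Inf block_mxEul block_mxEdr mxE. Qed.
Lemma eR x : ee (Rx x) = true.
Proof. by rewrite /ee /BM /B1mx /Rx /Inf block_mxEdl row_mxEr mxE. Qed.
Lemma GI : Gset Inf = set0.
Proof. apply/setP => y; by rewrite !inE /BM /B1mx /Rx /Inf block_mxEur col_mxEd mxE. Qed.
Lemma GR x : Gset (Rx x) = Is A1 x.
Proof. apply/setP => y; by rewrite !inE /BM /B1mx /Rx block_mxEdr (A2E HS). Qed.
Lemma GL x : Gset (Lx x) = Op x.
Proof.
apply/setP => y; rewrite !inE /BM /B1mx /Rx /Lx block_mxEur col_mxEu !mxE.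
case: HS => h0 _; rewrite h0 mxE /ed.
case: (eqVneq y x) => [->|ne]; by rewrite ?(A1d HS) ?add0r ?addr0.
Qed.

End BB.
Section Comb.
Variable m : nat.
Variable A1 : 'M[int]_m.
Variables k l : nat.
Local Notation e := (ed A1).
Local Notation O := (Os A1).
Local Notation I := (Is A1).
Local Notation Opl := (Op A1).
Hypothesis Hirr : forall x, ~~ e x x.
Hypothesis Htour : forall x y, x != y -> e y x = ~~ e x y.
Hypothesis Hk : forall x, #|O x| = k /\ #|I x| = k.
Hypothesis Hl : forall x y, x != y -> #|O x :&: O y| = l /\ #|I x :&: I y| = l.
Hypothesis Hkl : k = l.*2.+1.
Hypothesis Hl1 : 0 < l.

Lemma asym x y : e x y -> e y x = false.
Proof.
move=> h; have nxy : x != y by apply/eqP => ex; move: h; rewrite ex (negbTE (Hirr y)).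
by rewrite Htour // h.
Qed.

Lemma neq_e x y : e x y -> x != y.
Proof. by move=> h; apply/eqP => ex; move: h; rewrite ex (negbTE (Hirr y)). Qed.

Lemma tour2 x y : x != y -> e x y \/ e y x.
Proof. by move=> h; rewrite (Htour h); case: (e x y); [left|right]. Qed.

Lemma cardS3 (A B C : {set 'I_m}) : #|A :&: B :&: C| <= #|A :&: B|.
Proof. apply: subset_leq_card; exact: subsetIl. Qed.

Lemma cardU_le (A B : {set 'I_m}) : #|A :|: B| <= #|A| + #|B|.
Proof. rewrite cardsU; lia. Qed.

Lemma cardU_disj (A B : {set 'I_m}) : A :&: B = set0 -> #|A :|: B| = #|A| + #|B|.
Proof. by move=> h; rewrite cardsU h cards0 subn0. Qed.

Lemma Opair x y : x != y -> #|Opl x :&: Opl y| <= l.+1.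
Proof.
wlog hxy : x y / e x y.
  move=> W nxy; case: (tour2 nxy) => h; first exact: W.
  rewrite setIC; apply: W => //; by rewrite eq_sym.
move=> nxy.
have sub : Opl x :&: Opl y \subset (O x :&: O y) :|: [set y].
  apply/subsetP => w; rewrite !inE.
  case: (eqVneq w y) => [->|nwy]; first by rewrite orbT.
  case: (eqVneq w x) => [->|nwx] /=; first by rewrite (asym hxy).
  by move=> /andP[-> ->].
apply: leq_trans (subset_leq_card sub) _.
apply: leq_trans (cardU_le _ _) _.
by rewrite cards1 (proj1 (Hl nxy)) addn1.
Qed.


Lemma LLR x y z : x != y ->
  #|O x :&: O y :&: O z| + #|Opl x :&: Opl y :&: I z| <= l.+1.
Proof.
move=> nxy; rewrite -cardU_disj; last first.
  apply/setP => w; rewrite !inE; apply/negbTE; apply/negP.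
  case/andP => /andP[_ h1] /andP[_ h2]; by rewrite (asym h1) in h2.
apply: leq_trans (Opair nxy); apply: subset_leq_card; apply/subsetP => w.
rewrite !inE; case/orP => [/andP[/andP[-> ->] _]|/andP[/andP[-> ->] _]]; by rewrite ?orbT.
Qed.

Lemma LRR x y z : y != z ->
  #|O x :&: O y :&: O z| + #|Opl x :&: I y :&: I z| <= l.*2.
Proof.
move=> nyz; have [h1 h2] := Hl nyz.
have s1 : #|O x :&: O y :&: O z| <= #|O y :&: O z|.
  apply: subset_leq_card; apply/subsetP => w; rewrite !inE.
  by case/andP => /andP[_ ->] ->.
have s2 : #|Opl x :&: I y :&: I z| <= #|I y :&: I z|.
  apply: subset_leq_card; apply/subsetP => w; rewrite !inE.
  by case/andP => /andP[_ ->] ->.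
lia.
Qed.

Lemma perm12 (A B C : {set 'I_m}) : B :&: A :&: C = A :&: B :&: C.
Proof. by apply/setP => w; rewrite !inE; case: (w \in A); case: (w \in B); case: (w \in C). Qed.
Lemma perm312 (A B C : {set 'I_m}) : C :&: A :&: B = A :&: B :&: C.
Proof. by apply/setP => w; rewrite !inE; case: (w \in A); case: (w \in B); case: (w \in C). Qed.

Lemma sinkL a b c : b != c -> e b a -> e c a ->
  #|O a :&: O b :&: O c| + #|Opl a :&: Opl b :&: Opl c| < l.*2.
Proof.
move=> nbc hba hca.
have [h1 _] := Hl nbc.
have s1 : O a :&: O b :&: O c \subset (O b :&: O c) :\ a.
  apply/subsetP => w; rewrite !inE; case/andP => /andP[h -> ->].
  rewrite /= andbT; apply/negP => /eqP ew; move: h; by rewrite ew (negbTE (Hirr a)).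
have c1 := cardsD1 a (O b :&: O c).
rewrite !inE hba hca /= h1 in c1.
have s2 : Opl a :&: Opl b :&: Opl c \subset (O a :&: O b :&: O c) :|: [set a].
  apply/subsetP => w; rewrite !inE.
  case: (eqVneq w a) => [->|nwa] /=; first by rewrite orbT.
  case/andP => /andP[hw hb hc]; rewrite hw /=.
  case: (eqVneq w b) hb => [ewb|nwb] /= hb.
    by rewrite ewb (asym hba) in hw.
  case: (eqVneq w c) hc => [ewc|nwc] /= hc.
    by rewrite ewc (asym hca) in hw.
  by rewrite hb hc.
have t1 : #|O a :&: O b :&: O c| <= #|(O b :&: O c) :\ a| := subset_leq_card s1.
have t2 : #|Opl a :&: Opl b :&: Opl c| <= #|(O a :&: O b :&: O c) :|: [set a]|
  := subset_leq_card s2.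
have := cardU_le (O a :&: O b :&: O c) [set a]; rewrite cards1 -addnn; move: t1 t2 c1; set S := #|O a :&: O b :&: O c|; set R := #|Opl a :&: Opl b :&: Opl c|. set D := #|O b :&: O c :\ a|; set U := #|O a :&: O b :&: O c :|: [set a]|. lia.
Qed.

Lemma LLL x y z : x != y -> y != z -> x != z ->
  #|O x :&: O y :&: O z| + #|Opl x :&: Opl y :&: Opl z| <= l.*2.
Proof.
move=> nxy nyz nxz.
case hx: (e y x && e z x).
  case/andP: hx => h1 h2; apply: ltnW; exact: sinkL.
case hy: (e x y && e z y).
  case/andP: hy => h1 h2; rewrite -perm12 -[Opl x :&: _ :&: _]perm12.
  apply: ltnW; exact: sinkL.
case hz: (e x z && e y z).
  case/andP: hz => h1 h2; rewrite -perm312 -[Opl x :&: _ :&: _]perm312.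
  apply: ltnW; apply: sinkL => //.
have [h1 _] := Hl nxy.
have s1 : #|O x :&: O y :&: O z| <= l by rewrite -h1; exact: cardS3.
have s2 : Opl x :&: Opl y :&: Opl z \subset O x :&: O y :&: O z.
  have nyx : y != x by rewrite eq_sym.
  have nzy : z != y by rewrite eq_sym.
  have nzx : z != x by rewrite eq_sym.
  apply/subsetP => w; rewrite !inE.
  case: (eqVneq w x) => [->|nwx].
    rewrite ?(negbTE nxy) ?(negbTE nxz) /=.
    by case/andP => ha hb; rewrite ha hb in hx.
  case: (eqVneq w y) => [->|nwy].
    rewrite ?(negbTE nyx) ?(negbTE nyz) /=.
    by case/andP => /andP[ha _] hb; rewrite ha hb in hy.
  case: (eqVneq w z) => [->|nwz].
    rewrite ?(negbTE nzx) ?(negbTE nzy) /=.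
    by case/andP => /andP[ha hb] _; rewrite ha hb in hz.
  by [].
have t2 : #|Opl x :&: Opl y :&: Opl z| <= #|O x :&: O y :&: O z|
  := subset_leq_card s2.
lia.
Qed.


Lemma perm231 (A B C : {set 'I_m}) : B :&: C :&: A = A :&: B :&: C.
Proof. by apply/setP => w; rewrite !inE; case: (w \in A); case: (w \in B); case: (w \in C). Qed.

Lemma tight (A B C : {set 'I_m}) : #|A :&: B| <= #|A :&: B :&: C| ->
  forall w, w \in A -> w \in B -> w \in C.
Proof.
move=> h; have E : A :&: B :&: C = A :&: B by apply/eqP; rewrite eqEcard subsetIl h.
move=> w ha hb; have : w \in A :&: B by rewrite inE ha hb.
by rewrite -E inE => /andP[_ ->].
Qed.

Lemma exOI a b : e a b -> exists w, e a w && e w b.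
Proof.
move=> hab; case: (pickP (fun w => e a w && e w b)) => [w hw|none]; first by exists w.
exfalso.
have nab := neq_e hab.
have sub : O a \subset (O a :&: O b) :|: [set b].
  apply/subsetP => w; rewrite !inE => haw.
  case: (eqVneq w b) => [->|nwb]; first by rewrite orbT.
  case: (tour2 nwb) => h.
    by have := none w; rewrite /= haw h.
  by rewrite haw h.
have t1 : #|O a| <= #|(O a :&: O b) :|: [set b]| := subset_leq_card sub.
have := cardU_le (O a :&: O b) [set b]; rewrite cards1 (proj1 (Hl nab)).
move: t1; rewrite (proj1 (Hk a)); set U := #|_ :|: _|; lia.
Qed.

Lemma sinkC a b c : (forall w, w \in O b -> w \in O c -> w \in O a) ->
  e b a -> e c a -> False.
Proof.
move=> H h1 h2; by have := H a; rewrite !inE h1 h2 (negbTE (Hirr a)) => /(_ isT isT).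
Qed.

Lemma cycC a b c : e a b -> e c a ->
  (forall w, w \in O a -> w \in O c -> w \in O b) ->
  (forall w, w \in I b -> w \in I c -> w \in I a) -> False.
Proof.
move=> hab hca HO HI; have [w /andP[haw hwb]] := exOI hab.
have nwc : w != c.
  by apply/eqP => ewc; move: haw; rewrite ewc (asym hca).
case: (tour2 nwc) => h.
  have := HI w; rewrite !inE hwb h => /(_ isT isT) hwa.
  by rewrite (asym haw) in hwa.
have := HO w; rewrite !inE haw h => /(_ isT isT) hbw.
by rewrite (asym hwb) in hbw.
Qed.

Lemma RRR x y z : x != y -> y != z -> x != z ->
  #|O x :&: O y :&: O z| + #|I x :&: I y :&: I z| < l.*2.
Proof.
move=> nxy nyz nxz.
have [o1 i1] := Hl nxy; have [o2 i2] := Hl nyz; have [o3 i3] := Hl nxz.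
have s1 : #|O x :&: O y :&: O z| <= l by rewrite -o1; exact: cardS3.
have s2 : #|I x :&: I y :&: I z| <= l by rewrite -i1; exact: cardS3.
rewrite ltnNge; apply/negP => hge.
have eS : #|O x :&: O y :&: O z| = l by move: hge s1 s2; set S := #|O x :&: _ :&: _|; set R := #|I x :&: _ :&: _|; lia.
have eR : #|I x :&: I y :&: I z| = l by move: hge s1 s2; set S := #|O x :&: _ :&: _|; set R := #|I x :&: _ :&: _|; lia.
have Oxy : forall w, w \in O x -> w \in O y -> w \in O z by apply: tight; rewrite o1 eS.
have Oxz : forall w, w \in O x -> w \in O z -> w \in O y by apply: tight; rewrite o3 setIAC eS.
have Oyz : forall w, w \in O y -> w \in O z -> w \in O x by apply: tight; rewrite o2 perm231 eS.
have Ixy : forall w, w \in I x -> w \in I y -> w \in I z by apply: tight; rewrite i1 eR.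
have Ixz : forall w, w \in I x -> w \in I z -> w \in I y by apply: tight; rewrite i3 setIAC eR.
have Iyz : forall w, w \in I y -> w \in I z -> w \in I x by apply: tight; rewrite i2 perm231 eR.
case: (tour2 nxy) => hxy; case: (tour2 nyz) => hyz; case: (tour2 nxz) => hxz.
- exact: (sinkC Oxy hxz hyz).
- exact: (cycC hxy hxz Oxz Iyz).
- exact: (sinkC Oxz hxy hyz).
- exact: (sinkC Oxz hxy hyz).
- exact: (sinkC Oxy hxz hyz).
- exact: (sinkC Oyz hxy hxz).
- exact: (cycC hxz hxy Oxy (fun w h1 h2 => Iyz w h2 h1)).
- exact: (sinkC Oyz hxy hxz).
Qed.

End Comb.
Lemma key (m n : nat) (A0 A1 A2 : 'M[int]_m) : n = m.+1 -> 7 <= m ->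
  nonsym_class2_scheme A0 A1 A2 ->
  forall i j k : 'I_(m + 1 + m), i < j < k ->
    2 * nu (B1mx A0 A1 A2) i j k <= n - 2 /\
    (2 * nu (B1mx A0 A1 A2) i j k = n - 2 <->
       exists a : 'I_m, [/\ val i = val a, val j = m & val k = n + val a]).
Proof.
move=> hn hm HS i j k hijk.
have [kk [l [hmk hkl hk hl]]] := params HS hm.
have Hl1 : 0 < l by lia.
have Hirr := ed_irr HS; have Htour := ed_tourn HS.
have finlt : forall v (P : Prop), v <= l.*2 -> ~ P ->
    2 * v <= n - 2 /\ (2 * v = n - 2 <-> P).
  move=> v P hv hP; split; first lia.
  split => h; [exfalso; lia | contradiction].
have fineq : forall v (P : Prop), v = kk -> P ->
    2 * v <= n - 2 /\ (2 * v = n - 2 <-> P).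
  move=> v P hv hP; split; first lia. by split => // _; lia.
have neq : forall a b : 'I_m, (a : nat) < b -> a != b.
  by move=> a b h; apply/eqP => e; rewrite e ltnn in h.
change (nu (B1mx A0 A1 A2)) with (nu (BM A0 A1 A2)); rewrite nu_dec; move: hijk.
case: (idx_cases i) => [[x ->]|[->|[x ->]]];
case: (idx_cases j) => [[y ->]|[->|[y ->]]];
case: (idx_cases k) => [[z ->]|[->|[z ->]]].
all: rewrite ?FL ?FI ?FR ?eL ?eI ?eR ?(GL HS) ?GI ?(GR HS) /=.
all: rewrite /= ?addn0 => hijk.
all: try (exfalso; (try have := ltn_ord x); (try have := ltn_ord y);
          (try have := ltn_ord z); lia).
- apply: finlt; last by case=> a [] h1 h2 h3; have := ltn_ord a; have := ltn_ord x; have := ltn_ord y; have := ltn_ord z; lia.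
  by apply: LLL => //; apply: neq; lia.
- (* LLI *) apply: finlt; last by case=> a [] h1 h2 h3; have := ltn_ord a; have := ltn_ord x; have := ltn_ord y; lia.
  rewrite setIT setI0 cards0 addn0 (proj1 (hl x y _)); first lia.
  apply: neq; lia.
- apply: finlt; last by case=> a [] h1 h2 h3; have := ltn_ord a; have := ltn_ord x; have := ltn_ord y; have := ltn_ord z; lia.
  have nxy : x != y by apply: neq; lia.
  apply: leq_trans (LLR Hirr Htour hl hkl Hl1 z nxy) _; lia.
- (* LIR *) rewrite setIT setI0 set0I cards0 addn0.
  case: (eqVneq x z) => [<-|nxz].
    apply: fineq; first by rewrite setIid (proj1 (hk x)).
    by exists x; split => //; lia.
  apply: finlt; first by rewrite (proj1 (hl _ _ nxz)); lia.
  case=> a [] h1 h2 h3; have := ltn_ord a; have := ltn_ord x; have := ltn_ord z.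
  move=> _ _ _; apply: (negP nxz); apply/eqP; apply: val_inj; rewrite /=; lia.
- apply: finlt; last by case=> a [] h1 h2 h3; have := ltn_ord a; have := ltn_ord x; have := ltn_ord y; have := ltn_ord z; lia.
  by apply: LRR => //; apply: neq; lia.
- (* IRR *) apply: finlt; last by case=> a [] h1 h2 h3; have := ltn_ord a; have := ltn_ord y; have := ltn_ord z; lia.
  rewrite setTI !set0I cards0 addn0 (proj1 (hl y z _)); first lia.
  apply: neq; lia.
- apply: finlt; last by case=> a [] h1 h2 h3; have := ltn_ord a; have := ltn_ord x; have := ltn_ord y; have := ltn_ord z; lia.
  rewrite -addnA add1n addnS; by apply: RRR => //; apply: neq; lia.
Qed.

Theorem lemma1 (n : nat) (A0 A1 A2 : 'M[int]_(n.-1)) :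
  8 <= n ->
  nonsym_class2_scheme A0 A1 A2 ->
  forall i j k : 'I_(n.-1 + 1 + n.-1),
    i < j < k ->
    2 * nu (B1mx A0 A1 A2) i j k <= n - 2 /\
    (2 * nu (B1mx A0 A1 A2) i j k = n - 2 <->
       exists a : 'I_(n.-1),
         [/\ val i = val a, val j = n.-1 & val k = n + val a]).
Proof.
move=> h8 HS i j k hijk.
apply: (key (m := n.-1) (n := n)) => //; lia.
Qed.
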